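(* Let $c\ge 3$ be an integer and $\lambda,\mu,\alpha>0$ with $\lambda<c\mu$. Let $(\pi_{i,j})_{(i,j)\in\mathcal S}$ be the stationary distribution of the continuous-time Markov chain on $\mathcal S=\{(i,j):0\le i\le c,\ j\ge i\}$ whose only transitions are: $(i,j)\to(i,j+1)$ at rate $\lambda$; $(i,j)\to(i+1,j)$ at rate $\min(j-i,c-i)\alpha$ for $i<c$, $j>i$; $(i,j)\to(i,j-1)$ at rate $i\mu$ for $i\ge1$, $j>i$; $(i,i)\to(i-1,i-1)$ at rate $i\mu$ for $i\ge 1$. For $k=1,\dots,c-1$ let $f_k(z)=(\lambda+k\mu+(c-k)\alpha)z-\lambda z^2-k\mu$ and let $z_k=\frac{\lambda+k\mu+(c-k)\alpha-\sqrt{(\lambda+k\mu+(c-k)\alpha)^2-4k\lambda\mu}}{2\lambda}$, $\hat z_k=\frac{\lambda+k\mu+(c-k)\alpha+\sqrt{(\lambda+k\mu+(c-k)\alpha)^2-4k\lambda\mu}}{2\lambda}$ be its roots ($0<z_k<1<\hat z_k$); let $\hat z_0=(\lambda+c\alpha)/\lambda$. For $k=0,\dots,c-1$ let $\widehat\Pi_k(z)=\sum_{j\ge c}\pi_{k,j}z^{j-k}$. Define constants $A_{k,j}$ ($1\le k\le c-1$, $0\le j\le k$) recursively by $A_{1,0}=\frac{c\alpha\pi_{0,c-1}\hat z_0}{f_1(\hat z_0)}$, $A_{1,1}=\pi_{1,c-1}-A_{1,0}$, and for $k\ge2$: $$A_{k,j}=\frac{(c-k+1)\alpha A_{k-1,j}\hat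 z_j}{f_k(\hat z_j)}\ (0\le j\le k-1),\qquad A_{k,k}=-(c-k+1)\alpha\sum_{j=0}^{k-1}\frac{A_{k-1,j}\hat z_j}{f_k(\hat z_j)}+\pi_{k,c-1}.$$ Fix $i\in\{2,\dots,c-1\}$. Define $a^{(i)}_c=\frac{(c-i+1)\alpha\widehat\Pi_{i-1}(z_i)}{i\mu z_i^{c-i}}$, $b^{(i)}_c=\frac{\lambda z_i}{i\mu}$, and for $j=c-1,\dots,i+1$, $$a^{(i)}_j=\frac{(j-i+1)\alpha\pi_{i-1,j}+i\mu a^{(i)}_{j+1}}{\lambda+i\mu+(j-i)\alpha-i\mu b^{(i)}_{j+1}},\qquad b^{(i)}_j=\frac{\lambda}{\lambda+i\mu+(j-i)\alpha-i\mu b^{(i)}_{j+1}}.$$ Then: (i) $\pi_{i,j}=a^{(i)}_j+b^{(i)}_j\pi_{i,j-1}$ for $j=i+1,\dots,c$; (ii) $a^{(i)}_j>0$ and $0<b^{(i)}_j<\frac{\lambda}{i\mu}$ for $j=i+1,\dots,c$; (iii) if $\hat z_0,\hat z_1,\dots,\hat z_{c-1}$ are pairwise distinct, then for all complex $z$ with $|z|\le1$, $$\widehat\Pi_i(z)=z^{c-i}\sum_{j=0}^{i}\frac{A_{i,j}}{\hat z_j-z}.$$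
   Context: The chain models an M/M/$c$ queue with setup times under the ON-OFF policy: $i$ is the number of busy servers, $j$ the number of jobs; arrivals Poisson($\lambda$), services exp($\mu$), setups exp($\alpha$). The condition $\lambda<c\mu$ guarantees a unique stationary distribution. *)

(* Defs.v *)
From Stdlib Require Import Reals Arith Lia Bool.
From Coquelicot Require Import Coquelicot.
Open Scope R_scope. Open Scope bool_scope.

(* The M/M/c queue with setup times (ON-OFF policy).  States (i,j) with
   0 <= i <= c and j >= i; pi : nat -> nat -> R, only its values on the state
   space S matter. *)

Definition inS (c i j : nat) : bool := (i <=? c)%nat && (i <=? j)%nat.

Definition rate (c : nat) (lam mu alpha : R) (i j i' j' : nat) : R :=
  (if (i' =? i)%nat && (j' =? S j)%nat then lam else 0)
  + (if (i <? c)%nat && (i <? j)%nat && (i' =? S i)%nat && (j' =? j)%nat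
     then INR (Nat.min (j - i) (c - i)) * alpha else 0)
  + (if (1 <=? i)%nat && (i <? j)%nat && (i' =? i)%nat && (S j' =? j)%nat
     then INR i * mu else 0)
  + (if (1 <=? i)%nat && (i =? j)%nat && (S i' =? i)%nat && (S j' =? j)%nat
     then INR i * mu else 0).

Definition outrate (c : nat) (lam mu alpha : R) (i j : nat) : R :=
  lam
  + (if (i <? c)%nat && (i <? j)%nat then INR (Nat.min (j - i) (c - i)) * alpha else 0)
  + (if (1 <=? i)%nat then INR i * mu else 0).

(* The sums over S are ordered by j, and for fixed j over 0 <= i <= min(c,j). *)
Definition stationary (c : nat) (lam mu alpha : R) (pi : nat -> nat -> R) : Prop :=
  (forall i j, inS c i j = true -> 0 <= pi i j) /\
  is_series (fun j => sum_f_R0 (fun i => pi i j) (Nat.min c j)) 1 /\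
  (forall i j, inS c i j = true ->
     is_series (fun j' => sum_f_R0 (fun i' => pi i' j' * rate c lam mu alpha i' j' i j)
                                   (Nat.min c j'))
               (pi i j * outrate c lam mu alpha i j)).

Section Consts.
Variables (c : nat) (lam mu alpha : R) (pi : nat -> nat -> R).

Definition bk (k : nat) : R := lam + INR k * mu + INR (c - k) * alpha.

Definition fk (k : nat) (z : R) : R := bk k * z - lam * z ^ 2 - INR k * mu.

Definition zk (k : nat) : R :=
  (bk k - sqrt (bk k ^ 2 - 4 * INR k * lam * mu)) / (2 * lam).

Definition zhat (k : nat) : R :=
  match k with
  | O => (lam + INR c * alpha) / lam
  | _ => (bk k + sqrt (bk k ^ 2 - 4 * INR k * lam * mu)) / (2 * lam)
  end.

Definition PihatR (k : nat) (x : R) : R :=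
  Series (fun m => pi k (c + m)%nat * x ^ (c + m - k)).

(* A_{k,j}; A 0 _ is unused (set to 0) *)
Fixpoint Acoef (k j : nat) : R :=
  match k with
  | O => 0
  | S k' =>
    match k' with
    | O =>
      let A10 := INR c * alpha * pi 0%nat (c - 1)%nat * zhat 0 / fk 1 (zhat 0) in
      match j with
      | O => A10
      | 1%nat => pi 1%nat (c - 1)%nat - A10
      | _ => 0
      end
    | S _ =>
      if (j <? k)%nat then
        INR (c - k + 1) * alpha * Acoef k' j * zhat j / fk k (zhat j)
      else if (j =? k)%nat then
        - (INR (c - k + 1) * alpha)
          * sum_f_R0 (fun l => Acoef k' l * zhat l / fk k (zhat l)) (k - 1)
        + pi k (c - 1)%nat
      else 0
    end
  end.

(* (a^{(i)}_j, b^{(i)}_j) for j = c - n, computed downward from j = c *)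
Fixpoint ab (i n : nat) : R * R :=
  match n with
  | O => ((INR (c - i + 1) * alpha * PihatR (i - 1) (zk i))
            / (INR i * mu * zk i ^ (c - i)),
          lam * zk i / (INR i * mu))
  | S n' =>
    let j := (c - n)%nat in
    let (a1, b1) := ab i n' in
    let den := lam + INR i * mu + INR (j - i) * alpha - INR i * mu * b1 in
    ((INR (j - i + 1) * alpha * pi (i - 1)%nat j + INR i * mu * a1) / den,
     lam / den)
  end.

Definition acoef (i j : nat) : R := fst (ab i (c - j)).
Definition bcoef (i j : nat) : R := snd (ab i (c - j)).

End Consts.

(* Main.v *)
Require Import Defs.
From Stdlib Require Import Reals Arith Lia Lra Bool.
From Coquelicot Require Import Coquelicot.
Open Scope R_scope.

Ltac bstep := match goal with
 | |- context [Nat.eqb ?a ?b] => destruct (Nat.eqb_spec a b)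
 | |- context [Nat.ltb ?a ?b] => destruct (Nat.ltb_spec a b)
 | |- context [Nat.leb ?a ?b] => destruct (Nat.leb_spec a b)
 end; cbn [andb]; try (exfalso; lia).
Ltac brute := repeat bstep.

Lemma inflow_pt c l m a (pi : nat -> nat -> R) k j i' j' :
  (1 <= k)%nat -> (k < c)%nat -> (k < j)%nat ->
  pi i' j' * rate c l m a i' j' k j =
   (if (i' =? k) && (j' =? j-1) then pi k (j-1)%nat * l else 0)
 + (if (i' =? k-1) && (j' =? j) then pi (k-1)%nat j * (INR (Nat.min (j-(k-1)) (c-(k-1))) * a) else 0)
 + (if (i' =? k) && (j' =? S j) then pi k (S j) * (INR k * m) else 0).
Proof.
  intros. unfold rate. brute; subst; rewrite ?Nat.sub_succ, ?Nat.sub_0_r; ring.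
Qed.

Lemma inflow0_pt c l m a (pi : nat -> nat -> R) j i' j' :
  (0 < j)%nat -> (0 < c)%nat ->
  pi i' j' * rate c l m a i' j' 0 j =
   (if (i' =? 0) && (j' =? j-1) then pi 0%nat (j-1)%nat * l else 0).
Proof.
  intros. unfold rate. brute; subst; rewrite ?Nat.sub_succ, ?Nat.sub_0_r; ring.
Qed.

Lemma sum_zero n : sum_f_R0 (fun _ => 0) n = 0.
Proof. induction n; simpl; try rewrite IHn; ring. Qed.

Lemma sum_cond (k n : nat) (b : bool) (v : R) :
  sum_f_R0 (fun i => if (i =? k) && b then v else 0) n = if (k <=? n) && b then v else 0.
Proof.
  destruct b.
  - rewrite andb_true_r. rewrite (sum_eq _ (fun i => if i =? k then v else 0)); [|intros; rewrite andb_true_r; auto].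
    induction n.
    + simpl. destruct k; simpl; lra.
    + cbn [sum_f_R0]. rewrite IHn. destruct (Nat.eqb_spec (S n) k); destruct (Nat.leb_spec k n);
      destruct (Nat.leb_spec k (S n)); simpl; try lia; lra.
  - rewrite andb_false_r. rewrite (sum_eq _ (fun _ => 0)). apply sum_zero.
    intros. rewrite andb_false_r. auto.
Qed.

Definition spike (p : nat) (v : R) (n : nat) : R := if n =? p then v else 0.

Lemma sum_spike p v N : sum_f_R0 (spike p v) N = if (p <=? N) then v else 0.
Proof.
  unfold spike. induction N.
  - simpl. destruct p; simpl; lra.
  - cbn [sum_f_R0]. rewrite IHN. destruct (Nat.eqb_spec (S N) p); destruct (Nat.leb_spec p N);
      destruct (Nat.leb_spec p (S N)); simpl; try lia; lra.
Qed.

Lemma is_series_spike p v : is_series (spike p v) v.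
Proof.
  apply is_series_Reals. intros eps He. exists p. intros n Hn.
  rewrite sum_spike. destruct (Nat.leb_spec p n); try lia. unfold R_dist.
  rewrite Rminus_eq_0, Rabs_R0. auto.
Qed.

Lemma is_series_plusR (a b : nat -> R) la lb :
  is_series a la -> is_series b lb -> is_series (fun n => a n + b n) (la + lb).
Proof. intros. apply (is_series_plus a b la lb); auto. Qed.

Lemma outrate_int c l m a k j : (1 <= k)%nat -> (k < c)%nat -> (k < j)%nat ->
  outrate c l m a k j = l + INR (Nat.min (j - k) (c - k)) * a + INR k * m.
Proof. intros. unfold outrate. brute; ring. Qed.

Lemma outrate0 c l m a j : (0 < c)%nat -> (0 < j)%nat ->
  outrate c l m a 0 j = l + INR (Nat.min j c) * a.
Proof. intros. unfold outrate. brute. rewrite !Nat.sub_0_r. ring. Qed.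

Lemma bal_int c l m a pi k j : stationary c l m a pi ->
  (1 <= k)%nat -> (k < c)%nat -> (k < j)%nat ->
  pi k j * (l + INR (Nat.min (j - k) (c - k)) * a + INR k * m) =
  pi k (j-1)%nat * l + pi (k-1)%nat j * (INR (Nat.min (j-(k-1)) (c-(k-1))) * a)
  + pi k (S j) * (INR k * m).
Proof.
  intros [_ [_ Hb]] H1 H2 H3.
  assert (HS : inS c k j = true) by (unfold inS; apply andb_true_intro; split; apply Nat.leb_le; lia).
  specialize (Hb k j HS). rewrite outrate_int in Hb by auto.
  rewrite <- (is_series_unique _ _ Hb). apply is_series_unique.
  eapply is_series_ext; [| apply is_series_plusR; [apply is_series_plusR; [apply (is_series_spike (j-1)) | apply (is_series_spike j)] | apply (is_series_spike (S j))]].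
  intros j'. simpl.
  rewrite (sum_eq _ _ _ (fun i' _ => inflow_pt c l m a pi k j i' j' H1 H2 H3)).
  rewrite !sum_plus, !sum_cond. unfold spike. brute; ring.
Qed.

Lemma bal0 c l m a pi j : stationary c l m a pi -> (0 < c)%nat -> (0 < j)%nat ->
  pi 0%nat j * (l + INR (Nat.min j c) * a) = pi 0%nat (j-1)%nat * l.
Proof.
  intros [_ [_ Hb]] H1 H2.
  assert (HS : inS c 0 j = true) by (unfold inS; apply andb_true_intro; split; apply Nat.leb_le; lia).
  specialize (Hb 0%nat j HS). rewrite outrate0 in Hb by auto.
  rewrite <- (is_series_unique _ _ Hb). apply is_series_unique.
  eapply is_series_ext; [| apply (is_series_spike (j-1))].
  intros j'. simpl.
  rewrite (sum_eq _ _ _ (fun i' _ => inflow0_pt c l m a pi j i' j' H2 H1)).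
  rewrite !sum_cond. unfold spike. brute; ring.
Qed.


Lemma sum_nonneg (f : nat -> R) n : (forall i, (i <= n)%nat -> 0 <= f i) -> 0 <= sum_f_R0 f n.
Proof.
  induction n; intros Hf; simpl.
  - apply Hf; lia.
  - assert (0 <= sum_f_R0 f n) by (apply IHn; intros; apply Hf; lia).
    assert (0 <= f (S n)) by (apply Hf; lia). lra.
Qed.

Lemma sum_ge_term (f : nat -> R) n k : (forall i, (i <= n)%nat -> 0 <= f i) -> (k <= n)%nat ->
  f k <= sum_f_R0 f n.
Proof.
  induction n; intros Hf Hk.
  - assert (k = 0%nat) by lia. subst. simpl. lra.
  - cbn [sum_f_R0]. destruct (Nat.eq_dec k (S n)).
    + subst. assert (0 <= sum_f_R0 f n) by (apply sum_nonneg; intros; apply Hf; lia). lra.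
    + assert (f k <= sum_f_R0 f n) by (apply IHn; [intros; apply Hf; lia | lia]).
      assert (0 <= f (S n)) by (apply Hf; lia). lra.
Qed.

Lemma series_term_le (a : nat -> R) l n : is_series a l -> (forall n, 0 <= a n) -> a n <= l.
Proof.
  intros Hs Hp. apply is_series_Reals in Hs.
  assert (sum_f_R0 a n <= l).
  { apply (growing_ineq (sum_f_R0 a)); auto.
    intro k. simpl. specialize (Hp (S k)). lra. }
  assert (a n <= sum_f_R0 a n) by (apply sum_ge_term; auto). lra.
Qed.

Lemma rate_nonneg c l m a i j i' j' : 0 <= l -> 0 <= m -> 0 <= a -> 0 <= rate c l m a i j i' j'.
Proof.
  intros. unfold rate.
  assert (0 <= INR (Nat.min (j - i) (c - i)) * a) by (apply Rmult_le_pos; auto; apply pos_INR).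
  assert (0 <= INR i * m) by (apply Rmult_le_pos; auto; apply pos_INR).
  repeat match goal with |- context [if ?b then _ else _] => destruct b end; lra.
Qed.

Lemma inS_intro c i j : (i <= c)%nat -> (i <= j)%nat -> inS c i j = true.
Proof. intros. unfold inS. apply andb_true_intro; split; apply Nat.leb_le; lia. Qed.

Lemma zero_prop c l m a pi i j i' j' : 0 < l -> 0 < m -> 0 < a -> stationary c l m a pi ->
  (i <= c)%nat -> (i <= j)%nat -> pi i j = 0 -> (i' <= c)%nat -> (i' <= j')%nat ->
  0 < rate c l m a i' j' i j -> pi i' j' = 0.
Proof.
  intros Hl Hm Ha [Hpos [_ Hb]] H1 H2 H0 H3 H4 Hr.
  specialize (Hb i j (inS_intro _ _ _ H1 H2)). rewrite H0, Rmult_0_l in Hb.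
  set (F := fun j' => sum_f_R0 (fun i' => pi i' j' * rate c l m a i' j' i j) (Nat.min c j')).
  assert (HF : forall n, 0 <= F n).
  { intro n. unfold F. apply sum_nonneg. intros k Hk. apply Rmult_le_pos.
    apply Hpos, inS_intro; lia. apply rate_nonneg; lra. }
  assert (F j' <= 0) by (apply series_term_le; auto).
  assert (pi i' j' * rate c l m a i' j' i j <= F j').
  { unfold F. apply (sum_ge_term (fun i' => pi i' j' * rate c l m a i' j' i j)); [|lia].
    intros k Hk. apply Rmult_le_pos. apply Hpos, inS_intro; lia. apply rate_nonneg; lra. }
  assert (0 <= pi i' j') by (apply Hpos, inS_intro; lia).
  nra.
Qed.

Lemma pi_le1 c l m a pi i j : stationary c l m a pi -> (i <= c)%nat -> (i <= j)%nat -> pi i j <= 1.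
Proof.
  intros [Hpos [Ht _]] H1 H2.
  assert (HF : forall n, 0 <= sum_f_R0 (fun i => pi i n) (Nat.min c n)).
  { intro n. apply sum_nonneg. intros k Hk. apply Hpos, inS_intro; lia. }
  pose proof (series_term_le _ _ j Ht HF).
  assert (pi i j <= sum_f_R0 (fun i => pi i j) (Nat.min c j)).
  { apply (sum_ge_term (fun i => pi i j)); [|lia]. intros k Hk. apply Hpos, inS_intro; lia. }
  lra.
Qed.

Section Pos.
Variables (c : nat) (l m a : R) (pi : nat -> nat -> R).
Hypotheses (Hl : 0 < l) (Hm : 0 < m) (Ha : 0 < a) (Hst : stationary c l m a pi) (Hc : (1 <= c)%nat).

Lemma arc1 i j : 0 < rate c l m a i j i (S j).
Proof.
  unfold rate. rewrite !Nat.eqb_refl. cbn [andb].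
  assert (0 <= INR (Nat.min (j - i) (c - i)) * a) by (apply Rmult_le_pos; try lra; apply pos_INR).
  assert (0 <= INR i * m) by (apply Rmult_le_pos; try lra; apply pos_INR).
  repeat match goal with |- context [if ?b then _ else _] => destruct b end; lra.
Qed.

Lemma arc2 i j : (i < c)%nat -> (i < j)%nat -> 0 < rate c l m a i j (S i) j.
Proof.
  intros. unfold rate.
  assert (0 < INR (Nat.min (j - i) (c - i)) * a) by (apply Rmult_lt_0_compat; try lra; apply lt_0_INR; lia).
  assert (0 <= INR i * m) by (apply Rmult_le_pos; try lra; apply pos_INR).
  brute; lra.
Qed.

Lemma arc3 i j : (1 <= i)%nat -> (i <= j)%nat -> 0 < rate c l m a i (S j) i j.
Proof.
  intros. unfold rate.
  assert (0 <= INR (Nat.min (S j - i) (c - i)) * a) by (apply Rmult_le_pos; try lra; apply pos_INR).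
  assert (0 < INR i * m) by (apply Rmult_lt_0_compat; try lra; apply lt_0_INR; lia).
  brute; lra.
Qed.

Lemma arc4 i : 0 < rate c l m a (S i) (S i) i i.
Proof.
  intros. unfold rate.
  assert (0 < INR (S i) * m) by (apply Rmult_lt_0_compat; try lra; apply lt_0_INR; lia).
  brute; lra.
Qed.

Definition Z i j := pi i j = 0.

Lemma zL1 i j : (i <= c)%nat -> (i <= j)%nat -> Z i (S j) -> Z i j.
Proof. intros. apply (zero_prop c l m a pi i (S j) i j); auto; try lia. apply arc1. Qed.
Lemma zL2 i j : (S i <= c)%nat -> (S i <= j)%nat -> Z (S i) j -> Z i j.
Proof. intros. apply (zero_prop c l m a pi (S i) j i j); auto; try lia. apply arc2; lia. Qed.
Lemma zL3 i j : (1 <= i <= c)%nat -> (i <= j)%nat -> Z i j -> Z i (S j).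
Proof. intros. apply (zero_prop c l m a pi i j i (S j)); auto; try lia. apply arc3; lia. Qed.
Lemma zL4 i : (S i <= c)%nat -> Z i i -> Z (S i) (S i).
Proof. intros. apply (zero_prop c l m a pi i i (S i) (S i)); auto; try lia. apply arc4. Qed.

Lemma zdown d i j : (i <= c)%nat -> (i <= j)%nat -> Z i (j + d) -> Z i j.
Proof.
  induction d; intros H1 H2 H3. rewrite Nat.add_0_r in H3; auto.
  apply IHd; auto. apply zL1; try lia. rewrite <- Nat.add_succ_r. auto.
Qed.

Lemma all_zero k : (k <= c)%nat -> Z k c -> forall i j, (i <= c)%nat -> (i <= j)%nat -> Z i j.
Proof.
  intros Hk Z0.
  assert (Zkk : Z k k) by (apply (zdown (c - k)); try lia; replace (k + (c - k))%nat with c by lia; auto).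
  assert (Hd : forall d, (k + d <= c)%nat -> Z (k + d) (k + d)).
  { induction d; intros. rewrite Nat.add_0_r; auto. rewrite Nat.add_succ_r. apply zL4; try lia. apply IHd; lia. }
  assert (Zcc : Z c c) by (replace c with (k + (c - k))%nat by lia; apply Hd; lia).
  assert (Hr : forall d, Z c (c + d)).
  { induction d. rewrite Nat.add_0_r; auto. rewrite Nat.add_succ_r. apply zL3; try lia. auto. }
  assert (Hl2 : forall e d, (e <= c)%nat -> Z (c - e) (c + d)).
  { induction e; intros d He. rewrite Nat.sub_0_r; auto.
    apply zL2; try lia. replace (S (c - S e)) with (c - e)%nat by lia. apply IHe; lia. }
  intros i j Hi Hj. destruct (Nat.le_gt_cases c j).
  - replace i with (c - (c - i))%nat by lia. replace j with (c + (j - c))%nat by lia. apply Hl2; lia.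
  - apply (zdown (c - j)); try lia. replace (j + (c - j))%nat with c by lia.
    pose proof (Hl2 (c - i)%nat 0%nat ltac:(lia)) as HH.
    replace (c - (c - i))%nat with i in HH by lia. rewrite Nat.add_0_r in HH. exact HH.
Qed.

Lemma pos_kc k : (k <= c)%nat -> 0 < pi k c.
Proof.
  intros Hk. destruct Hst as [Hpos [Ht _]].
  assert (0 <= pi k c) by (apply Hpos, inS_intro; lia).
  destruct (Rle_lt_or_eq_dec _ _ H) as [?|E]; auto. exfalso.
  assert (Hz := all_zero k Hk (eq_sym E)).
  assert (is_series (fun j => sum_f_R0 (fun i => pi i j) (Nat.min c j)) 0).
  { eapply is_series_ext; [|apply (is_series_spike 0 0)]. intro n. unfold spike.
    rewrite (sum_eq _ (fun _ => 0)). rewrite sum_zero. destruct (n =? 0); auto.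
    intros i Hi. apply Hz; lia. }
  apply is_series_unique in Ht. apply is_series_unique in H0. lra.
Qed.

End Pos.

Lemma boundary (Q P : nat -> R) x1 x2 g B :
  1 < x1 -> (forall n, Rabs (Q n) <= B) ->
  (forall n, Q (S (S n)) = (x1 + x2) * Q (S n) - x1 * x2 * Q n - g * P (S n)) ->
  is_series (fun n => g * P (S n) * (/ x1) ^ (S n)) (Q 1%nat - x2 * Q 0%nat).
Proof.
  intros H1 HB HR.
  set (e := fun n => Q (S n) - x2 * Q n).
  assert (He : forall n, e (S n) = x1 * e n - g * P (S n)).
  { intro n. unfold e. rewrite HR. ring. }
  set (w := / x1).
  assert (Hw : x1 * w = 1) by (unfold w; field; lra).
  assert (Hw0 : 0 < w < 1).
  { unfold w. split. apply Rinv_0_lt_compat; lra. rewrite <- Rinv_1. apply Rinv_lt_contravar; lra. }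
  assert (Hs : forall n, sum_f_R0 (fun n => g * P (S n) * w ^ (S n)) n = e 0%nat - e (S n) * w ^ (S n)).
  { induction n.
    - simpl. rewrite He. replace (w * 1) with w by ring.
      replace ((x1 * e 0%nat - g * P 1%nat) * w) with ((x1 * w) * e 0%nat - g * P 1%nat * w) by ring.
      rewrite Hw. ring.
    - cbn [sum_f_R0]. rewrite IHn. rewrite (He (S n)).
      replace (w ^ S (S n)) with (w * w ^ (S n)) by (simpl; ring).
      replace ((x1 * e (S n) - g * P (S (S n))) * (w * w ^ S n)) with
        ((x1 * w) * e (S n) * w ^ S n - g * P (S (S n)) * (w * w ^ S n)) by ring.
      rewrite Hw. ring. }
  assert (HB0 : 0 <= B) by (specialize (HB 0%nat); pose proof (Rabs_pos (Q 0%nat)); lra).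
  set (K := B + Rabs x2 * B).
  assert (HK0 : 0 <= K) by (unfold K; pose proof (Rabs_pos x2); nra).
  assert (HeB : forall n, Rabs (e n) <= K).
  { intro n. unfold e, K. replace (Q (S n) - x2 * Q n) with (Q (S n) + - (x2 * Q n)) by ring.
    pose proof (Rabs_triang (Q (S n)) (- (x2 * Q n))) as HT. rewrite Rabs_Ropp, Rabs_mult in HT.
    pose proof (HB (S n)). pose proof (HB n). pose proof (Rabs_pos x2). nra. }
  apply is_series_Reals. intros eps Heps.
  assert (Hy : 0 < eps / (K + 1)) by (apply Rdiv_lt_0_compat; lra).
  destruct (pow_lt_1_zero w ltac:(rewrite Rabs_pos_eq; lra) _ Hy) as [N HN].
  exists N. intros n Hn. unfold R_dist. rewrite Hs.
  replace (e 0%nat - e (S n) * w ^ S n - (Q 1%nat - x2 * Q 0%nat)) with (- (e (S n) * w ^ S n)) by (unfold e; ring).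
  rewrite Rabs_Ropp, Rabs_mult.
  assert (Rabs (w ^ S n) < eps / (K + 1)) by (apply HN; lia).
  pose proof (HeB (S n)). pose proof (Rabs_pos (w ^ S n)). pose proof (Rabs_pos (e (S n))).
  assert (K * (eps / (K+1)) < eps).
  { replace (K * (eps / (K+1))) with (eps * (K / (K+1))) by (field; lra).
    assert (K / (K+1) < 1) by (replace (K / (K+1)) with (1 - / (K+1)) by (field; lra); assert (0 < / (K+1)) by (apply Rinv_0_lt_compat; lra); lra). assert (eps * (K / (K+1)) < eps * 1) by (apply Rmult_lt_compat_l; lra). lra. }
  nra.
Qed.

Lemma one_lt_div (x y : R) : 0 < y -> y < x -> 1 < x / y.
Proof. intros. assert (0 < (x - y) / y) by (apply Rdiv_lt_0_compat; lra).
  replace (x / y) with (1 + (x - y) / y) by (field; lra). lra. Qed.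

Section Quad.
Variables (c : nat) (l m a : R) (k : nat).
Hypotheses (Hl : 0 < l) (Hm : 0 < m) (Ha : 0 < a) (Hk1 : (1 <= k)%nat) (Hkc : (k < c)%nat).

Let b := bk c l m a k.
Let D := b ^ 2 - 4 * INR k * l * m.
Let s := sqrt D.

Lemma INRk_pos : 0 < INR k. Proof. apply lt_0_INR; lia. Qed.
Lemma INRck_pos : 0 < INR (c - k). Proof. apply lt_0_INR; lia. Qed.

Lemma b_gt : b > l + INR k * m.
Proof. unfold b, bk. pose proof INRck_pos. nra. Qed.

Lemma D_pos : 0 < D.
Proof. unfold D. pose proof b_gt. pose proof INRk_pos.
  assert (0 <= (l - INR k * m) ^ 2) by (apply pow2_ge_0).
  assert (0 < (b - (l+INR k*m)) * (b + (l + INR k*m))) by (apply Rmult_lt_0_compat; nra). nra. Qed.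

Lemma s_sq : s * s = D.
Proof. unfold s. apply sqrt_sqrt. pose proof D_pos; lra. Qed.
Lemma s_pos : 0 < s.
Proof. unfold s. apply sqrt_lt_R0. apply D_pos. Qed.
Lemma s_lt_b : s < b.
Proof. pose proof s_sq. pose proof s_pos. pose proof b_gt. pose proof INRk_pos.
  unfold D in *. assert (0 < INR k * l * m) by (apply Rmult_lt_0_compat; nra).
  destruct (Rlt_or_le s b); auto. assert (b * b <= s * s) by (apply Rmult_le_compat; nra). nra. Qed.

Definition x1q := (b + s) / (2 * INR k * m).
Definition x2q := (b - s) / (2 * INR k * m).

Lemma x_sum : x1q + x2q = b / (INR k * m).
Proof. unfold x1q, x2q. pose proof INRk_pos. field. nra. Qed.
Lemma x_prod : x1q * x2q = l / (INR k * m).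
Proof. unfold x1q, x2q. pose proof INRk_pos. pose proof s_sq. unfold D in *.
  assert (0 < INR k * m) by nra.
  replace ((b + s) / (2 * INR k * m) * ((b - s) / (2 * INR k * m))) with
    ((b*b - s*s) / (4*(INR k*m)*(INR k*m))) by (field; lra).
  rewrite H0. field. lra. Qed.

Lemma x1_gt1 : 1 < x1q.
Proof.
  unfold x1q. pose proof INRk_pos. pose proof s_sq. pose proof s_pos. pose proof b_gt.
  apply one_lt_div. nra.
  destruct (Rlt_or_le b (2 * INR k * m)); [|nra].
  unfold D in *.
  assert (s > 2 * INR k * m - b); [|lra].
  apply Rsqr_incrst_0; unfold Rsqr; try nra.
Qed.

Lemma zk_eq : zk c l m a k = / x1q.
Proof.
  unfold zk, x1q. fold b. fold D. fold s. pose proof INRk_pos. pose proof s_sq. pose proof s_pos.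
  pose proof s_lt_b. unfold D in *. field_simplify; try nra.
  apply Rmult_eq_reg_r with (2 * l * (b + s)); [|nra].
  field_simplify; try nra.
Qed.

Lemma zk_bounds : 0 < zk c l m a k < 1.
Proof. rewrite zk_eq. pose proof x1_gt1. split. apply Rinv_0_lt_compat; lra.
  rewrite <- Rinv_1. apply Rinv_lt_contravar; lra. Qed.

Lemma x2_eq : x2q = l * zk c l m a k / (INR k * m).
Proof. rewrite zk_eq. pose proof x_prod. pose proof x1_gt1. pose proof INRk_pos.
  apply Rmult_eq_reg_l with x1q; [|lra]. rewrite H. field. nra. Qed.

Lemma zhat_eq : zhat c l m a k = (b + s) / (2 * l).
Proof. destruct k; [lia|]. reflexivity. Qed.

Lemma zhat_gt1 : 1 < zhat c l m a k.
Proof.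
  rewrite zhat_eq. pose proof INRk_pos. pose proof s_sq. pose proof s_pos. pose proof b_gt.
  apply one_lt_div. nra.
  destruct (Rlt_or_le b (2 * l)); [|nra].
  unfold D in *.
  assert (s > 2 * l - b); [|lra].
  apply Rsqr_incrst_0; unfold Rsqr; try nra.
Qed.

Lemma fk_factor x : fk c l m a k x = - l * (x - zk c l m a k) * (x - zhat c l m a k).
Proof.
  rewrite zhat_eq. unfold zk. fold b. fold D. fold s. unfold fk. fold b.
  pose proof s_sq. unfold D in *. field_simplify; try lra.
  replace (s^2) with (b^2 - 4 * INR k * l * m) by nra. field. lra.
Qed.

Lemma fk_zhat : fk c l m a k (zhat c l m a k) = 0.
Proof. rewrite fk_factor. ring. Qed.

End Quad.



Ltac Ceq0 := match goal with |- @eq _ ?x ?y => change (@eq C x y) end.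
Ltac Ceq := repeat match goal with
 | |- context [@pow_n C_Ring ?x ?n] => let t := fresh "t" in set (t := @pow_n C_Ring x n) in *; clearbody t; change C in t
 | |- context [@sum_n ?G ?f ?n] => let t := fresh "t" in set (t := @sum_n G f n) in *; clearbody t; change C in t
 end; Ceq0.

Lemma pow_n_S_C (x : C) n : pow_n x (S n) = (x * pow_n x n)%C.
Proof. reflexivity. Qed.
Lemma pow_n_O_C (x : C) : pow_n x 0 = RtoC 1.
Proof. reflexivity. Qed.

Lemma pow_n_plus_C (z : C) p q : pow_n z (p + q) = (pow_n z p * pow_n z q)%C.
Proof.
  induction p. rewrite Nat.add_0_l, pow_n_O_C. Ceq; ring.
  rewrite Nat.add_succ_l, !pow_n_S_C, IHp. Ceq; ring.
Qed.

Lemma pow_n_mult_C (x y : C) n : pow_n (x * y)%C n = (pow_n x n * pow_n y n)%C.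
Proof. induction n. rewrite !pow_n_O_C. Ceq; ring. rewrite !pow_n_S_C, IHn. Ceq; ring. Qed.

Lemma RtoC_pow x n : RtoC (x ^ n) = pow_n (RtoC x) n.
Proof. induction n. reflexivity. rewrite pow_n_S_C, <- IHn. simpl pow. apply RtoC_mult. Qed.

Lemma Cmod_pow (x : C) n : Cmod (pow_n x n) = Cmod x ^ n.
Proof. induction n. rewrite pow_n_O_C. simpl. apply Cmod_1. rewrite pow_n_S_C, Cmod_mult, IHn. reflexivity. Qed.

Lemma RtoC_sum (f : nat -> R) n : RtoC (sum_f_R0 f n) = sum_n (fun j => RtoC (f j)) n.
Proof. induction n. rewrite sum_O. reflexivity. rewrite sum_Sn, <- IHn. simpl. apply RtoC_plus. Qed.

Lemma Cgeom_partial (q : C) n : (sum_n (pow_n q) n * (RtoC 1 - q))%C = (RtoC 1 - pow_n q (S n))%C.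
Proof.
  induction n. rewrite sum_O. rewrite pow_n_S_C, pow_n_O_C. Ceq; ring.
  rewrite sum_Sn. change (plus (sum_n (pow_n q) n) (pow_n q (S n))) with
    (Cplus (sum_n (pow_n q) n) (pow_n q (S n))).
  rewrite Cmult_plus_distr_r, IHn. rewrite (pow_n_S_C q (S n)). Ceq; ring.
Qed.

Lemma Cgeom (q : C) : Cmod q < 1 -> is_series (pow_n q) (/ (RtoC 1 - q))%C.
Proof.
  intros Hq.
  assert (Hq1 : (RtoC 1 - q)%C <> RtoC 0).
  { intro E. assert (q = RtoC 1). { apply (f_equal (fun x => Cplus x q)) in E. ring_simplify in E. rewrite <- E. Ceq; ring. }
    subst. rewrite Cmod_1 in Hq. lra. }
  assert (Hm : 0 < Cmod (RtoC 1 - q)) by (apply Cmod_gt_0; auto).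
  unfold is_series. apply filterlim_locally. intros eps.
  assert (Hy : 0 < eps * Cmod (RtoC 1 - q)) by (apply Rmult_lt_0_compat; [apply cond_pos|auto]).
  destruct (pow_lt_1_zero (Cmod q) ltac:(rewrite Rabs_pos_eq; [lra|apply Cmod_ge_0]) _ Hy) as [N HN].
  exists N. intros n Hn. apply norm_compat1.
  change (Cmod (sum_n (pow_n q) n - / (RtoC 1 - q))%C < eps).
  assert (E : (sum_n (pow_n q) n - / (RtoC 1 - q))%C = (- pow_n q (S n) / (RtoC 1 - q))%C).
  { assert (Es : sum_n (pow_n q) n = ((RtoC 1 - pow_n q (S n)) / (RtoC 1 - q))%C).
    { rewrite <- Cgeom_partial. Ceq; field; auto. }
    rewrite Es. Ceq; field; auto. }
  rewrite E, Cmod_div by auto. rewrite Cmod_opp, Cmod_pow.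
  assert (Rabs (Cmod q ^ S n) < eps * Cmod (RtoC 1 - q)) by (apply HN; lia).
  rewrite Rabs_pos_eq in H by (apply pow_le, Cmod_ge_0).
  apply (Rmult_lt_reg_r (Cmod (RtoC 1 - q))); auto. unfold Rdiv. rewrite Rmult_assoc, Rinv_l by lra. lra.
Qed.

Lemma is_series_sum_n (f : nat -> nat -> C) (L : nat -> C) N :
  (forall j, (j <= N)%nat -> is_series (f j) (L j)) ->
  is_series (fun m => sum_n (fun j => f j m) N) (sum_n L N).
Proof.
  induction N; intros H.
  - rewrite sum_O. eapply is_series_ext; [|apply (H 0%nat); lia]. intro n. rewrite sum_O. reflexivity.
  - rewrite sum_Sn.
    pose proof (is_series_plus (K:=C_AbsRing) (V:=C_NormedModule) _ _ _ _ (IHN ltac:(intros; apply H; lia)) (H (S N) ltac:(lia))) as Hp.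
    refine (is_series_ext _ _ _ _ Hp). intro n. rewrite sum_Sn. reflexivity.
Qed.

Lemma Csum_mult_r (f : nat -> C) (x : C) N : sum_n (fun j => (f j * x)%C) N = (sum_n f N * x)%C.
Proof. apply (sum_n_mult_r (K:=C_Ring)). Qed.


Ltac sd := solve [lia | lra | auto].

Lemma is_series_scalR (k : R) (a : nat -> R) l : is_series a l -> is_series (fun n => k * a n) (k * l).
Proof. intros H. apply (is_series_scal_l k a l H). Qed.

Lemma down_ind (P : nat -> Prop) lo hi : P hi -> (forall j, (lo <= j < hi)%nat -> P (S j) -> P j) ->
  forall j, (lo <= j <= hi)%nat -> P j.
Proof.
  intros Hhi Hs. intros j Hj. remember (hi - j)%nat as d. revert j Hj Heqd.
  induction d; intros j Hj Hd.
  - replace j with hi by lia. auto.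
  - apply Hs. lia. apply IHd; lia.
Qed.


Section Main.
Variables (c : nat) (l m a : R) (pi : nat -> nat -> R).
Hypotheses (Hc : (3 <= c)%nat) (Hl : 0 < l) (Hm : 0 < m) (Ha : 0 < a) (Hlc : l < INR c * m)
  (Hst : stationary c l m a pi).

Lemma pi_nonneg i j : (i <= c)%nat -> (i <= j)%nat -> 0 <= pi i j.
Proof. intros. destruct Hst as [Hp _]. apply Hp, inS_intro; auto. Qed.

Lemma level_rec k n : (1 <= k)%nat -> (k < c)%nat ->
  pi k (c - 1 + S (S n))%nat * (INR k * m) =
  bk c l m a k * pi k (c - 1 + S n)%nat - l * pi k (c - 1 + n)%nat
  - INR (c - k + 1) * a * pi (k - 1)%nat (c - 1 + S n)%nat.
Proof.
  intros H1 H2.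
  pose proof (bal_int c l m a pi k (c + n) Hst H1 H2 ltac:(lia)) as HB.
  replace (Nat.min (c + n - k) (c - k)) with (c - k)%nat in HB by lia.
  replace (Nat.min (c + n - (k - 1)) (c - (k - 1))) with (c - k + 1)%nat in HB by lia.
  replace (c - 1 + S (S n))%nat with (S (c + n)) by lia.
  replace (c - 1 + S n)%nat with (c + n)%nat by lia.
  replace (c - 1 + n)%nat with (c + n - 1)%nat by lia.
  unfold bk. lra.
Qed.

Lemma level_rec_x k n : (1 <= k)%nat -> (k < c)%nat ->
  pi k (c - 1 + S (S n))%nat =
  (x1q c l m a k + x2q c l m a k) * pi k (c - 1 + S n)%nat
  - x1q c l m a k * x2q c l m a k * pi k (c - 1 + n)%nat
  - (INR (c - k + 1) * a / (INR k * m)) * pi (k - 1)%nat (c - 1 + S n)%nat.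
Proof.
  intros H1 H2. rewrite (x_sum c l m a k), (x_prod c l m a k) by sd.
  pose proof (level_rec k n H1 H2). assert (0 < INR k) by (apply lt_0_INR; lia).
  apply Rmult_eq_reg_r with (INR k * m). 2: nra.
  rewrite H. field. nra.
Qed.

Lemma level_series k : (1 <= k)%nat -> (k < c)%nat ->
  is_series (fun n => (INR (c - k + 1) * a / (INR k * m)) * pi (k - 1)%nat (c - 1 + S n)%nat
                       * (zk c l m a k) ^ (S n))
    (pi k c - l * zk c l m a k / (INR k * m) * pi k (c - 1)%nat).
Proof.
  intros H1 H2. rewrite <- (x2_eq c l m a k) by sd. rewrite (zk_eq c l m a k) by sd.
  replace (pi k c) with (pi k (c - 1 + 1)%nat) by (f_equal; lia).
  replace (pi k (c - 1)%nat) with (pi k (c - 1 + 0)%nat) by (f_equal; lia).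
  apply (boundary (fun n => pi k (c - 1 + n)%nat) (fun n => pi (k-1)%nat (c - 1 + n)%nat) _ _ _ 1).
  - apply x1_gt1; sd.
  - intro n. rewrite Rabs_pos_eq. apply (pi_le1 c l m a); auto; lia. apply pi_nonneg; lia.
  - intro n. apply level_rec_x; auto.
Qed.


Section Fixi.
Variable (i : nat).
Hypothesis (Hi : (2 <= i <= c - 1)%nat).

Let z := zk c l m a i.
Let g := INR (c - i + 1) * a / (INR i * m).
Let T := pi i c - l * z / (INR i * m) * pi i (c - 1)%nat.

Lemma Hz : 0 < z < 1. Proof. apply zk_bounds; sd. Qed.
Lemma Hg : 0 < g.
Proof. unfold g. apply Rdiv_lt_0_compat. apply Rmult_lt_0_compat; auto. apply lt_0_INR; lia.
  apply Rmult_lt_0_compat; auto. apply lt_0_INR; lia. Qed.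

Lemma Tser : is_series (fun n => g * pi (i - 1)%nat (c - 1 + S n)%nat * z ^ (S n)) T.
Proof. apply level_series; lia. Qed.

Lemma PihatR_eq : PihatR c pi (i - 1) z = z ^ (c - i) * T / g.
Proof.
  pose proof Hg. pose proof Hz.
  apply is_series_unique. replace (z ^ (c - i) * T / g) with (/ g * z ^ (c - i) * T) by (field; lra).
  eapply is_series_ext; [| apply (is_series_scalR (/ g * z ^ (c - i))); apply Tser].
  intro n. cbv beta. replace (c - 1 + S n)%nat with (c + n)%nat by lia.
  replace (c + n - (i - 1))%nat with ((c - i) + S n)%nat by lia. rewrite pow_add. match goal with |- ?x = ?y => change (@eq R x y) end. field. lra.
Qed.

Lemma acoef_c : acoef c l m a pi i c = T.
Proof.
  unfold acoef. rewrite Nat.sub_diag. simpl. fold z. rewrite PihatR_eq. fold g.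
  pose proof Hg. pose proof Hz. unfold g.
  assert (0 < z ^ (c - i)) by (apply pow_lt; lra).
  assert (0 < INR i) by (apply lt_0_INR; lia). assert (0 < INR (c - i + 1)) by (apply lt_0_INR; lia).
  field. repeat split; try lra; nra.
Qed.

Lemma bcoef_c : bcoef c l m a pi i c = l * z / (INR i * m).
Proof. unfold bcoef. rewrite Nat.sub_diag. reflexivity. Qed.

Lemma part_i_c : pi i c = acoef c l m a pi i c + bcoef c l m a pi i c * pi i (c - 1)%nat.
Proof. rewrite acoef_c, bcoef_c. unfold T. ring. Qed.

Lemma acoef_c_pos : 0 < acoef c l m a pi i c.
Proof.
  rewrite acoef_c. pose proof Hg. pose proof Hz.
  pose proof (pos_kc c l m a pi Hl Hm Ha Hst ltac:(lia) (i - 1) ltac:(lia)).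
  apply Rlt_le_trans with (g * pi (i - 1)%nat (c - 1 + 1)%nat * z ^ 1).
  - replace (c - 1 + 1)%nat with c by lia. simpl. rewrite Rmult_1_r.
    apply Rmult_lt_0_compat; [apply Rmult_lt_0_compat|]; lra.
  - apply (series_term_le _ _ 0 Tser). intro n. apply Rmult_le_pos; [apply Rmult_le_pos|].
    lra. apply pi_nonneg; lia. apply pow_le; lra.
Qed.

Lemma bcoef_c_bounds : 0 < bcoef c l m a pi i c < l / (INR i * m).
Proof.
  rewrite bcoef_c. pose proof Hz. assert (0 < INR i) by (apply lt_0_INR; lia).
  assert (0 < INR i * m) by nra. split.
  apply Rdiv_lt_0_compat; nra.
  unfold Rdiv. apply Rmult_lt_compat_r. apply Rinv_0_lt_compat; lra. nra.
Qed.

Lemma ab_step j : (i + 1 <= j <= c - 1)%nat ->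
  let den := l + INR i * m + INR (j - i) * a - INR i * m * bcoef c l m a pi i (S j) in
  acoef c l m a pi i j = (INR (j - i + 1) * a * pi (i - 1)%nat j + INR i * m * acoef c l m a pi i (S j)) / den
  /\ bcoef c l m a pi i j = l / den.
Proof.
  intros Hj den. unfold den, acoef, bcoef.
  replace (c - j)%nat with (S (c - S j)) by lia. cbn [ab].
  destruct (ab c l m a pi i (c - S j)) as [a1 b1] eqn:E. simpl.
  replace (c - S (c - S j))%nat with j by lia. split; reflexivity.
Qed.

Lemma bcoef_bounds j : (i + 1 <= j <= c)%nat -> 0 < bcoef c l m a pi i j < l / (INR i * m).
Proof.
  revert j. apply (down_ind (fun j => 0 < bcoef c l m a pi i j < l / (INR i * m)) (i+1) c).
  apply bcoef_c_bounds.
  intros j Hj [H1 H2]. destruct (ab_step j ltac:(lia)) as [_ Hb]. rewrite Hb.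
  assert (0 < INR i) by (apply lt_0_INR; lia). assert (0 < INR (j - i)) by (apply lt_0_INR; lia).
  assert (0 < INR i * m) by nra. assert (0 < INR (j - i) * a) by nra.
  assert (INR i * m * bcoef c l m a pi i (S j) < l).
  { replace l with (INR i * m * (l / (INR i * m))) at 2 by (field; lra). nra. }
  split. apply Rdiv_lt_0_compat; lra.
  unfold Rdiv. apply Rmult_lt_compat_l; auto. apply Rinv_lt_contravar; nra.
Qed.

Lemma acoef_pos j : (i + 1 <= j <= c)%nat -> 0 < acoef c l m a pi i j.
Proof.
  revert j. apply (down_ind (fun j => 0 < acoef c l m a pi i j) (i+1) c).
  apply acoef_c_pos.
  intros j Hj H1. destruct (ab_step j ltac:(lia)) as [Ha1 _]. rewrite Ha1.
  pose proof (bcoef_bounds (S j) ltac:(lia)) as [Hb1 Hb2].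
  assert (0 < INR i) by (apply lt_0_INR; lia). assert (0 < INR (j - i)) by (apply lt_0_INR; lia).
  assert (0 < INR (j - i + 1)) by (apply lt_0_INR; lia).
  assert (0 < INR i * m) by nra. assert (0 < INR (j - i) * a) by nra.
  assert (INR i * m * bcoef c l m a pi i (S j) < l).
  { replace l with (INR i * m * (l / (INR i * m))) at 2 by (field; lra). nra. }
  assert (0 <= pi (i - 1)%nat j) by (apply pi_nonneg; lia).
  apply Rdiv_lt_0_compat; [|lra].
  assert (0 <= INR (j - i + 1) * a * pi (i - 1)%nat j) by (apply Rmult_le_pos; nra). nra.
Qed.

Lemma part_i j : (i + 1 <= j <= c)%nat ->
  pi i j = acoef c l m a pi i j + bcoef c l m a pi i j * pi i (j - 1)%nat.
Proof.
  revert j. apply (down_ind (fun j => pi i j = acoef c l m a pi i j + bcoef c l m a pi i j * pi i (j - 1)%nat) (i+1) c).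
  apply part_i_c.
  intros j Hj H1. destruct (ab_step j ltac:(lia)) as [Ha1 Hb1]. rewrite Ha1, Hb1.
  pose proof (bcoef_bounds (S j) ltac:(lia)) as [Hb2 Hb3].
  assert (0 < INR i) by (apply lt_0_INR; lia). assert (0 < INR (j - i)) by (apply lt_0_INR; lia).
  assert (0 < INR i * m) by nra. assert (0 < INR (j - i) * a) by nra.
  assert (INR i * m * bcoef c l m a pi i (S j) < l).
  { replace l with (INR i * m * (l / (INR i * m))) at 2 by (field; lra). nra. }
  replace (S j - 1)%nat with j in H1 by lia.
  pose proof (bal_int c l m a pi i j Hst ltac:(lia) ltac:(lia) ltac:(lia)) as HB.
  replace (Nat.min (j - i) (c - i)) with (j - i)%nat in HB by lia.
  replace (Nat.min (j - (i - 1)) (c - (i - 1))) with (j - i + 1)%nat in HB by lia.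
  rewrite H1 in HB.
  apply Rmult_eq_reg_r with (l + INR i * m + INR (j - i) * a - INR i * m * bcoef c l m a pi i (S j)); [|lra].
  field_simplify; [|lra]. lra.
Qed.

End Fixi.

Definition Ad k j := match k with O => pi 0%nat (c - 1)%nat | _ => Acoef c l m a pi k j end.

Lemma Acoef_lt k j : (1 <= k)%nat -> (j < k)%nat ->
  Acoef c l m a pi k j = INR (c - k + 1) * a * Ad (k - 1) j * zhat c l m a j / fk c l m a k (zhat c l m a j).
Proof.
  intros H1 H2. destruct k as [|k]; [lia|]. destruct k as [|k].
  - assert (j = 0%nat) by lia. subst. simpl Ad. replace (c - 1 + 1)%nat with c by lia. reflexivity.
  - cbn [Acoef]. replace (j <? S (S k)) with true by (symmetry; apply Nat.ltb_lt; lia).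
    replace (S (S k) - 1)%nat with (S k) by lia. reflexivity.
Qed.

Lemma sum_lin3 (p q r : R) (f g h : nat -> R) N :
  sum_f_R0 (fun j => p * f j + q * g j + r * h j) N =
  p * sum_f_R0 f N + q * sum_f_R0 g N + r * sum_f_R0 h N.
Proof. induction N; simpl; [ring|]. rewrite IHN. ring. Qed.

Lemma sum_scal (p : R) (f : nat -> R) N : sum_f_R0 (fun j => p * f j) N = p * sum_f_R0 f N.
Proof. induction N; simpl; [ring|]. rewrite IHN. ring. Qed.

Lemma Acoef_diag k : (2 <= k)%nat -> Acoef c l m a pi k k =
  - (INR (c - k + 1) * a) * sum_f_R0 (fun j => Acoef c l m a pi (k - 1) j * zhat c l m a j / fk c l m a k (zhat c l m a j)) (k - 1)
  + pi k (c - 1)%nat.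
Proof.
  intros H. destruct k as [|[|k]]; try lia. cbn [Acoef].
  replace (S (S k) <? S (S k)) with false by (symmetry; apply Nat.ltb_ge; lia).
  rewrite Nat.eqb_refl. replace (S (S k) - 1)%nat with (S k) by lia. reflexivity.
Qed.

Lemma Acoef_sum k : (1 <= k)%nat -> sum_f_R0 (Acoef c l m a pi k) k = pi k (c - 1)%nat.
Proof.
  intros H1. destruct k as [|k]; [lia|]. destruct k as [|k].
  - simpl. ring.
  - rewrite tech5. rewrite (sum_eq _ (fun j => INR (c - S (S k) + 1) * a * (Acoef c l m a pi (S k) j * zhat c l m a j / fk c l m a (S (S k)) (zhat c l m a j)))).
    2: { intros j Hj. rewrite Acoef_lt by lia. replace (S (S k) - 1)%nat with (S k) by lia. change (Ad (S k) j) with (Acoef c l m a pi (S k) j). unfold Rdiv. ring. }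
    rewrite sum_scal.
    rewrite Acoef_diag by lia. replace (S (S k) - 1)%nat with (S k) by lia. ring.
Qed.

Lemma zhat_gt1_all j : (j < c)%nat -> 1 < zhat c l m a j.
Proof.
  intros H. destruct j as [|j].
  - simpl. apply one_lt_div; auto. assert (0 < INR c) by (apply lt_0_INR; lia). nra.
  - apply zhat_gt1; sd.
Qed.

Lemma fk_nz k j : (1 <= k)%nat -> (k < c)%nat -> (j < c)%nat -> zhat c l m a j <> zhat c l m a k ->
  fk c l m a k (zhat c l m a j) <> 0.
Proof.
  intros H1 H2 H3 H4. rewrite (fk_factor c l m a k) by sd.
  pose proof (zhat_gt1_all j H3). pose proof (zk_bounds c l m a k ltac:(lra) ltac:(lra) ltac:(lra) H1 H2).
  intro E. apply Rmult_integral in E as [E|E]. apply Rmult_integral in E as [E|E]; lra.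
  apply H4. lra.
Qed.

Lemma level0 n : pi 0%nat (c - 1 + n)%nat = pi 0%nat (c - 1)%nat * (/ zhat c l m a 0) ^ n.
Proof.
  induction n.
  - rewrite Nat.add_0_r. simpl. ring.
  - pose proof (bal0 c l m a pi (c - 1 + S n) Hst ltac:(lia) ltac:(lia)) as HB.
    replace (Nat.min (c - 1 + S n) c) with c in HB by lia.
    replace (c - 1 + S n - 1)%nat with (c - 1 + n)%nat in HB by lia.
    rewrite IHn in HB. assert (0 < INR c) by (apply lt_0_INR; lia).
    assert (0 < l + INR c * a) by nra.
    apply Rmult_eq_reg_r with (l + INR c * a); [|lra]. rewrite HB.
    simpl zhat. simpl pow. field. lra.
Qed.

Lemma term_lt (A Ap gam km b lam x : R) n :
  x <> 0 -> b * x - lam * x ^ 2 - km <> 0 ->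
  A = gam * Ap * x / (b * x - lam * x ^ 2 - km) ->
  km * (A * (/ x) ^ (S (S n))) + - b * (A * (/ x) ^ (S n)) + lam * (A * (/ x) ^ n) =
  - gam * (Ap * (/ x) ^ (S n)).
Proof.
  intros Hx Hf HA. subst A. simpl pow. field. split; auto. simpl in Hf. rewrite Rmult_1_r in Hf. auto.
Qed.

Lemma term_eq (A b lam km x : R) n :
  x <> 0 -> b * x - lam * x ^ 2 - km = 0 ->
  km * (A * (/ x) ^ (S (S n))) + - b * (A * (/ x) ^ (S n)) + lam * (A * (/ x) ^ n) = 0.
Proof.
  intros Hx Hf. replace km with (b * x - lam * x ^ 2) by lra. simpl pow. field. auto.
Qed.

Section Step.
Hypothesis Hdist : forall k j, (k < c)%nat -> (j < c)%nat -> k <> j -> zhat c l m a k <> zhat c l m a j.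

Definition Hlev k := forall n, pi k (c - 1 + n)%nat = sum_f_R0 (fun j => Ad k j * (/ zhat c l m a j) ^ n) k.

Lemma Hlev0 : Hlev 0.
Proof. intro n. simpl. rewrite level0. reflexivity. Qed.

Lemma Rrec k n : (1 <= k)%nat -> (k < c)%nat ->
  let R n := sum_f_R0 (fun j => Acoef c l m a pi k j * (/ zhat c l m a j) ^ n) k in
  INR k * m * R (S (S n)) - bk c l m a k * R (S n) + l * R n =
  - (INR (c - k + 1) * a) * sum_f_R0 (fun j => Ad (k - 1) j * (/ zhat c l m a j) ^ (S n)) (k - 1).
Proof.
  intros H1 H2 R. unfold R.
  match goal with |- ?p * ?X - ?q * ?Y + ?r * ?Z = _ => replace (p*X - q*Y + r*Z) with (p*X + (-q)*Y + r*Z) by ring end.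
  rewrite <- sum_lin3.
  destruct k as [|k]; [lia|]. rewrite tech5. replace (S k - 1)%nat with k by lia.
  rewrite term_eq. 2: { pose proof (zhat_gt1_all (S k) H2). lra. }
  2: { pose proof (fk_zhat c l m a (S k) Hl Hm Ha H1 H2). unfold fk in H. exact H. }
  rewrite Rplus_0_r. rewrite <- sum_scal. apply sum_eq. intros j Hj.
  apply term_lt.
  - pose proof (zhat_gt1_all j ltac:(lia)). lra.
  - pose proof (fk_nz (S k) j H1 H2 ltac:(lia) (Hdist j (S k) ltac:(lia) H2 ltac:(lia))). unfold fk in H. exact H.
  - rewrite Acoef_lt by lia. replace (S k - 1)%nat with k by lia. reflexivity.
Qed.

Lemma Rbound k n : (k < c)%nat ->
  Rabs (sum_f_R0 (fun j => Acoef c l m a pi k j * (/ zhat c l m a j) ^ n) k)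
  <= sum_f_R0 (fun j => Rabs (Acoef c l m a pi k j)) k.
Proof.
  intros H. eapply Rle_trans. apply sum_f_R0_triangle. apply sum_Rle. intros j Hj.
  rewrite Rabs_mult. pose proof (zhat_gt1_all j ltac:(lia)).
  assert (0 < / zhat c l m a j < 1).
  { split. apply Rinv_0_lt_compat; lra. rewrite <- Rinv_1. apply Rinv_lt_contravar; lra. }
  rewrite (Rabs_pos_eq ((/ zhat c l m a j) ^ n)) by (apply pow_le; lra).
  assert ((/ zhat c l m a j) ^ n <= 1) by (rewrite <- (pow1 n); apply pow_incr; lra).
  pose proof (Rabs_pos (Acoef c l m a pi k j)). nra.
Qed.

Lemma Hlev_step k : (1 <= k)%nat -> (k < c)%nat -> Hlev (k - 1) -> Hlev k.
Proof.
  intros H1 H2 IH.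
  set (R := fun n => sum_f_R0 (fun j => Acoef c l m a pi k j * (/ zhat c l m a j) ^ n) k).
  set (d := fun n => pi k (c - 1 + n)%nat - R n).
  assert (Hrec : forall n, d (S (S n)) = (x1q c l m a k + x2q c l m a k) * d (S n)
            - x1q c l m a k * x2q c l m a k * d n - 0 * (fun _ => 0) (S n)).
  { intro n. unfold d. rewrite (x_sum c l m a k), (x_prod c l m a k) by sd.
    pose proof (level_rec k n H1 H2) as HQ. pose proof (Rrec k n H1 H2) as HR. cbv zeta in HR.
    fold R in HR. rewrite <- (IH (S n)) in HR.
    assert (0 < INR k) by (apply lt_0_INR; lia).
    apply Rmult_eq_reg_r with (INR k * m). 2: nra.
    field_simplify; [|nra]. 
    match goal with |- _ = ?rhs => idtac end. nra. }
  assert (Hd0 : d 0%nat = 0).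
  { unfold d, R. rewrite Nat.add_0_r. simpl pow.
    rewrite (sum_eq _ (Acoef c l m a pi k)) by (intros; ring). rewrite Acoef_sum by lia. ring. }
  assert (HB : forall n, Rabs (d n) <= 1 + sum_f_R0 (fun j => Rabs (Acoef c l m a pi k j)) k).
  { intro n. unfold d. unfold Rminus. eapply Rle_trans. apply Rabs_triang. rewrite Rabs_Ropp.
    pose proof (Rbound k n H2). change (Rabs (R n) <= sum_f_R0 (fun j => Rabs (Acoef c l m a pi k j)) k) in H.
    rewrite Rabs_pos_eq by (apply pi_nonneg; lia).
    pose proof (pi_le1 c l m a pi k (c - 1 + n) Hst ltac:(lia) ltac:(lia)). lra. }
  pose proof (boundary d (fun _ => 0) _ _ 0 _ (x1_gt1 c l m a k Hl Hm Ha H1 H2) HB Hrec) as Hs.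
  assert (Hd1 : d 1%nat = 0).
  { assert (is_series (fun n : nat => 0 * (fun _ : nat => 0) (S n) * (/ x1q c l m a k) ^ S n) 0).
    { eapply is_series_ext; [|apply (is_series_spike 0 0)]. intro n. unfold spike. simpl.
      destruct (n =? 0); ring. }
    apply is_series_unique in Hs. apply is_series_unique in H. rewrite Hd0 in Hs. lra. }
  assert (Hall : forall n, d n = 0 /\ d (S n) = 0).
  { induction n. auto. destruct IHn as [E1 E2]. split; auto. rewrite Hrec, E1, E2. ring. }
  intro n. destruct (Hall n) as [E _]. unfold d, R in E.
  destruct k as [|k]; [lia|]. unfold Hlev, Ad. lra.
Qed.

Lemma Hlev_all k : (k < c)%nat -> Hlev k.
Proof.
  induction k; intros H. apply Hlev0.
  apply Hlev_step; try lia. replace (S k - 1)%nat with k by lia. apply IHk; lia.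
Qed.

Lemma term_series j (A : R) (z : C) : (j < c)%nat -> Cmod z <= 1 ->
  is_series (fun n => (RtoC (A * (/ zhat c l m a j) ^ (S n)) * pow_n z n)%C)
    (RtoC A / (RtoC (zhat c l m a j) - z))%C.
Proof.
  intros Hj Hz. pose proof (zhat_gt1_all j Hj) as Hzh.
  set (x := zhat c l m a j) in *.
  set (w := / x).
  assert (Hw : 0 < w < 1).
  { split. apply Rinv_0_lt_compat; lra. unfold w. rewrite <- Rinv_1. apply Rinv_lt_contravar; lra. }
  set (q := (RtoC w * z)%C).
  assert (Hq : Cmod q < 1).
  { unfold q. rewrite Cmod_mult, Cmod_R, Rabs_pos_eq by lra. pose proof (Cmod_ge_0 z). nra. }
  pose proof (is_series_scal_l (K:=C_AbsRing) (V:=C_NormedModule) (RtoC (A * w)) _ _ (Cgeom q Hq)) as Hs.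
  assert (Hxz : (RtoC x - z)%C <> RtoC 0).
  { intro E. assert (Hx : RtoC x = (RtoC x - z + z)%C) by (Ceq; ring). rewrite E, Cplus_0_l in Hx.
    assert (Cmod (RtoC x) = Cmod z) by (rewrite Hx; reflexivity).
    rewrite Cmod_R, Rabs_pos_eq in H by lra. lra. }
  assert (H1q : (RtoC 1 - q)%C <> RtoC 0).
  { intro E. assert (Hx : RtoC 1 = (RtoC 1 - q + q)%C) by (Ceq; ring). rewrite E, Cplus_0_l in Hx.
    rewrite <- Hx in Hq. rewrite Cmod_1 in Hq. lra. }
  assert (Hx0 : RtoC x <> RtoC 0) by (intro E; apply RtoC_inj in E; lra).
  replace (RtoC A / (RtoC x - z))%C with (scal (RtoC (A * w)) (/ (RtoC 1 - q)))%C.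
  - refine (is_series_ext _ _ _ _ Hs). intro n. cbv beta.
    change (scal (RtoC (A * w)) (pow_n q n)) with (RtoC (A * w) * pow_n q n)%C.
    unfold q. rewrite pow_n_mult_C, <- RtoC_pow. simpl pow. rewrite !RtoC_mult. Ceq. ring.
  - change (scal (RtoC (A * w)) (/ (RtoC 1 - q)))%C with (RtoC (A * w) * (/ (RtoC 1 - q)))%C.
    unfold q in *. unfold w in *. rewrite RtoC_mult, RtoC_inv by lra.
    Ceq. field. split; [exact Hxz | exact Hx0].
Qed.

Lemma part_iii i (z : C) : (1 <= i <= c - 1)%nat -> Cmod z <= 1 ->
  is_series (fun n => RtoC (pi i (c + n)%nat) * pow_n z (c + n - i))%C
    (pow_n z (c - i) *
     sum_n (fun j => RtoC (Acoef c l m a pi i j) / (RtoC (zhat c l m a j) - z)) i)%C.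
Proof.
  intros Hi Hz.
  pose proof (is_series_sum_n (fun j n => (RtoC (Acoef c l m a pi i j * (/ zhat c l m a j) ^ (S n)) * pow_n z n)%C)
     (fun j => RtoC (Acoef c l m a pi i j) / (RtoC (zhat c l m a j) - z))%C i
     (fun j Hj => term_series j (Acoef c l m a pi i j) z ltac:(lia) Hz)) as Hs.
  pose proof (is_series_scal_l (K:=C_AbsRing) (V:=C_NormedModule) (pow_n z (c - i)) _ _ Hs) as Hs2.
  refine (is_series_ext _ _ _ _ Hs2). intro n. cbv beta.
  change (scal (pow_n z (c - i)) ?u) with (pow_n z (c - i) * u)%C.
  pose proof (Hlev_all i ltac:(lia) (S n)) as HL. replace (c - 1 + S n)%nat with (c + n)%nat in HL by lia.
  rewrite HL. destruct i as [|i]; [lia|]. change (fun j => Ad (S i) j * (/ zhat c l m a j) ^ S n) with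
    (fun j => Acoef c l m a pi (S i) j * (/ zhat c l m a j) ^ S n).
  rewrite RtoC_sum.
  replace (c + n - S i)%nat with ((c - S i) + n)%nat by lia. rewrite pow_n_plus_C.
  rewrite (Csum_mult_r (fun j => RtoC (Acoef c l m a pi (S i) j * (/ zhat c l m a j) ^ S n)) (pow_n z n)).
  Ceq. ring.
Qed.
End Step.

End Main.


Theorem lemma3p2 (c : nat) (lam mu alpha : R) (pi : nat -> nat -> R) (i : nat) :
  (3 <= c)%nat -> 0 < lam -> 0 < mu -> 0 < alpha -> lam < INR c * mu ->
  stationary c lam mu alpha pi ->
  (2 <= i <= c - 1)%nat ->
  (forall j, (i + 1 <= j <= c)%nat ->
     pi i j = acoef c lam mu alpha pi i j + bcoef c lam mu alpha pi i j * pi i (j - 1)%nat)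
  /\
  (forall j, (i + 1 <= j <= c)%nat ->
     0 < acoef c lam mu alpha pi i j /\
     0 < bcoef c lam mu alpha pi i j < lam / (INR i * mu))
  /\
  ((forall k l, (k < c)%nat -> (l < c)%nat -> k <> l ->
      zhat c lam mu alpha k <> zhat c lam mu alpha l) ->
   forall z : Complex.C, Cmod z <= 1 ->
     is_series (fun m => RtoC (pi i (c + m)%nat) * pow_n z (c + m - i))%C
       (pow_n z (c - i) *
        sum_n (fun j => RtoC (Acoef c lam mu alpha pi i j) / (RtoC (zhat c lam mu alpha j) - z)) i)%C).
Proof.
  intros Hc Hl Hm Ha Hlc Hst Hi. split; [|split].
  - intros j Hj. apply part_i; auto.
  - intros j Hj. split. apply acoef_pos; auto. apply bcoef_bounds; auto.
  - intros Hdist z Hz. apply part_iii; auto. lia.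
Qed.
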